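(* Let $\tilde p,\tilde d\in C^{2}((0,1],\mathbb{R})$, $\tilde b\in C^2((0,1],\mathbb{C})$, $\tilde c\in C^1((0,1],\mathbb{C})$, $\tilde q\in C((0,1],\mathbb{R})$ with $\tilde p>0$ on $(0,1]$, and $w_1,w_2\in C^2((0,1],\mathbb{R})$ with $w:=w_1w_2>0$ on $(0,1)$. Assume: ($\tilde{\mathrm B}$1) the (possibly improper) limit $\tilde d_0:=\lim_{x\to0+}\tilde d(x)$ exists; ($\tilde{\mathrm B}$2) there are $\tilde\beta,\tilde\gamma>0$ with $|\tilde b(x)/x|\le\tilde\beta(|\tilde d(x)|+1)$, $|\tilde c(x)|\le\tilde\gamma(|\tilde d(x)|+1)$ for all $x\in(0,1]$; ($\tilde{\mathrm B}$3a) for some $\lambda\in\mathbb{R}\setminus\{\tilde d_0\}$ there is $x_\lambda\in(0,1)$ such that $\tilde\pi(x,\lambda)/x^2$ is bounded on $(0,x_\lambda]$; ($\tilde{\mathrm B}$3b) for all $\lambda\in\mathbb{R}\setminus(\overline{\tilde\Delta((0,1])}\cup\{\tilde d_0\})$ there is $x_\lambda\in(0,1)$ such that $x^2/\tilde\pi(x,\lambda)$, $\tilde\rho(x,\lambda)/x$, $\tilde\kappa(x,\lambda)$ are (defined and) bounded on $(0,x_\lambda]$; ($\tilde{\mathrm C}$1) for $\lambda\in\mathbb{R}\setminus(\overline{\tilde\Delta((0,1])}\cup\{\tilde d_0\})$ the limits $\tilde\rho_0(\lambda):=\lim_{x\to0+}\frac{x\tilde\rho(x,\lambda)}{\tilde\pi(x,\lambda)}$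 and $\tilde\kappa_0(\lambda):=\lim_{x\to0+}\frac{x^2\tilde\kappa(x,\lambda)}{\tilde\pi(x,\lambda)}$ exist and are finite; ($\tilde{\mathrm C}$2) the limit $\lim_{x\to0+}\frac{x^2w''(x)}{w(x)}$ exists and is finite. Let $W(t):=1+e^{-t}\frac{w'(e^{-t})}{w(e^{-t})}$, $t\in[0,\infty)$. Then for $\lambda\in\mathbb{R}\setminus(\overline{\tilde\Delta((0,1])}\cup\{\tilde d_0\})$, $$\lim_{x\to0+}x\frac{\frac{\partial}{\partial x}\tilde\pi(x,\lambda)}{\tilde\pi(x,\lambda)}=2,$$ $\lim_{t\to\infty}W(t)$ exists and is finite, $\lim_{t\to\infty}W'(t)=0$, and $\operatorname{Im}\tilde\rho_0(\lambda)=1+\lim_{t\to\infty}W(t)$.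
   Context: Definitions (for $x\in(0,1]$ with $\tilde d(x)\ne\lambda$): $\tilde\pi(x,\lambda):=\frac{w_2}{w_1}\tilde p-\frac{|\tilde b|^2}{\tilde d-\lambda}$; $\tilde\rho(x,\lambda):=-\frac{2\operatorname{Im}(\tilde b\overline{\tilde c})}{\tilde d-\lambda}+i\frac1w\frac{\partial}{\partial x}(w\tilde\pi(\cdot,\lambda))$; $\tilde\kappa(x,\lambda):=\tilde q-\lambda-\frac{|\tilde c|^2}{\tilde d-\lambda}+\frac1w\Big(w\frac{\overline{\tilde b}\tilde c}{\tilde d-\lambda}\Big)'-\frac{(\tilde p w_2')'}{w_1}$; $\tilde\Delta(x):=\tilde d(x)-\frac{w_1(x)}{w_2(x)}\frac{|\tilde b(x)|^2}{\tilde p(x)}$. Overline on a set denotes closure in $\mathbb{R}$. *)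

(* Defs.v *)
From Stdlib Require Import Reals.
From Coquelicot Require Import Coquelicot.
Open Scope R_scope.

Definition Ck_oc (k : nat) (f : R -> R) : Prop :=
  (forall j, (j < k)%nat -> forall x, 0 < x < 1 -> ex_derive (Derive_n f j) x) /\
  (forall j, (j <= k)%nat -> forall x, 0 < x < 1 -> continuous (Derive_n f j) x) /\
  (forall j, (j <= k)%nat -> exists l : R, filterlim (Derive_n f j) (at_left 1) (locally l)) /\
  filterlim f (at_left 1) (locally (f 1)).

Definition Ck_oc_C (k : nat) (f : R -> C) : Prop :=
  Ck_oc k (fun x => Re (f x)) /\ Ck_oc k (fun x => Im (f x)).

Definition CDerive (g : R -> C) (x : R) : C :=
  (Derive (fun y => Re (g y)) x, Derive (fun y => Im (g y)) x).

Definition in_closure (S : R -> Prop) (l : R) : Prop :=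
  forall eps : R, 0 < eps -> exists y, S y /\ Rabs (y - l) < eps.

Section Defs.
Variables (p d q w1 w2 : R -> R) (b c : R -> C).

Definition wt (x : R) : R := w1 x * w2 x.

Definition pit (x lam : R) : R :=
  w2 x / w1 x * p x - (Cmod (b x)) ^ 2 / (d x - lam).

Definition rho_im (x lam : R) : R :=
  / wt x * Derive (fun y => wt y * pit y lam) x.

Definition rhot (x lam : R) : C :=
  (RtoC (- 2 * Im (b x * Cconj (c x)) / (d x - lam)) + Ci * RtoC (rho_im x lam))%C.

Definition pw2_term (x : R) : R := Derive (fun y => p y * Derive w2 y) x / w1 x.

Definition kappat (x lam : R) : C :=
  (RtoC (q x - lam - (Cmod (c x)) ^ 2 / (d x - lam))
   + RtoC (/ wt x) * CDerive (fun y => RtoC (wt y) * (Cconj (b y) * c y) / RtoC (d y - lam)) x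
   - RtoC (pw2_term x))%C.

Definition Deltat (x : R) : R :=
  d x - w1 x / w2 x * (Cmod (b x)) ^ 2 / p x.

(* the image Delta((0,1]) (at points where Delta is defined, i.e. w2 x <> 0) *)
Definition Delta_img (y : R) : Prop :=
  exists x, 0 < x <= 1 /\ w2 x <> 0 /\ y = Deltat x.

Definition Wfun (t : R) : R :=
  1 + exp (- t) * Derive wt (exp (- t)) / wt (exp (- t)).

End Defs.

(* Main.v *)
Require Import Defs.
From Stdlib Require Import Reals.
From Coquelicot Require Import Coquelicot.
From Stdlib Require Import Lra Psatz Classical Lia.
Open Scope R_scope.

Lemma lim_p_eps (f : R -> R) (l : R) :
  filterlim f (Rbar_locally p_infty) (locally l) <->
  (forall eps, 0 < eps -> exists T, forall s, T < s -> Rabs (f s - l) < eps).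
Proof.
  rewrite filterlim_locally; split.
  - intros H eps He. destruct (H (mkposreal eps He)) as [T HT].
    exists T. intros s Hs. apply (HT s Hs).
  - intros H eps. destruct (H eps (cond_pos eps)) as [T HT].
    exists T. intros s Hs. apply (HT s Hs).
Qed.

Lemma lim_r0_eps (f : R -> R) (l : R) :
  filterlim f (at_right 0) (locally l) <->
  (forall eps, 0 < eps -> exists del, 0 < del /\ forall x, 0 < x < del -> Rabs (f x - l) < eps).
Proof.
  rewrite filterlim_locally; split.
  - intros H eps He. destruct (H (mkposreal eps He)) as [del Hd].
    exists del. split. apply cond_pos. intros x [Hx1 Hx2].
    apply (Hd x). change (Rabs (x - 0) < del). rewrite Rminus_0_r, Rabs_pos_eq; lra. exact Hx1.
  - intros H eps. destruct (H eps (cond_pos eps)) as [del [Hd HH]].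
    exists (mkposreal del Hd). intros x Hx Hx0. apply HH. split; auto.
    change (Rabs (x - 0) < del) in Hx. rewrite Rminus_0_r, Rabs_pos_eq in Hx; lra.
Qed.

Lemma cont_eps f x : continuous f x -> forall eps, 0 < eps ->
  exists del, 0 < del /\ forall y, Rabs (y - x) < del -> Rabs (f y - f x) < eps.
Proof.
  intros H eps He. apply filterlim_locally with (eps := mkposreal eps He) in H.
  destruct H as [del Hd]. exists del. split. apply cond_pos.
  intros y Hy. apply (Hd y Hy).
Qed.

Lemma der_eps f x l : is_derive f x l -> forall eps, 0 < eps ->
  exists del, 0 < del /\ forall h, h <> 0 -> Rabs h < del -> Rabs ((f (x + h) - f x) / h - l) < eps.
Proof.
  intros H eps He. apply is_derive_Reals in H. destruct (H eps He) as [del Hd].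
  exists del. split. apply cond_pos. exact Hd.
Qed.
Lemma no_cross (phi dphi : R -> R) S :
 (forall s, S < s -> is_derive phi s (dphi s)) ->
 (forall s, S < s -> phi s = 0 -> 0 < dphi s) ->
 forall s1 s2, S < s1 -> s1 <= s2 -> 0 <= phi s1 -> 0 <= phi s2.
Proof.
  intros Hd Hz s1 s2 Hs1 H12 H1.
  destruct (Rle_or_lt 0 (phi s2)) as [H2|H2]; auto. exfalso.
  set (E := fun t => s1 <= t <= s2 /\ 0 <= phi t).
  destruct (completeness E) as [m [Hub Hlub]].
  { exists s2. intros t [[_ Ht] _]. exact Ht. }
  { exists s1. split; [lra|auto]. }
  assert (Hm1 : s1 <= m) by (apply Hub; split; [lra|auto]).
  assert (Hm2 : m <= s2) by (apply Hlub; intros t [[_ Ht] _]; exact Ht).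
  assert (Hc : continuous phi m).
  { apply (ex_derive_continuous (K := R_AbsRing) (V := R_NormedModule)). exists (dphi m). apply Hd. lra. }
  destruct (Rlt_or_le (phi m) 0) as [Hn|Hp].
  - destruct (cont_eps _ _ Hc (- phi m)) as [del [Hdel Hcd]]; [lra|].
    assert (m <= m - del); [|lra].
    apply Hlub. intros t [[Ht1 Ht2] Ht3].
    destruct (Rle_or_lt t (m - del)) as [?|Hlt]; auto.
    assert (t <= m) by (apply Hub; split; [lra|auto]).
    assert (Rabs (t - m) < del) by (rewrite Rabs_left1; lra).
    specialize (Hcd t H0). apply Rabs_def2 in Hcd. lra.
  - assert (Hms : m < s2) by (destruct (Req_dec m s2); [subst; lra|lra]).
    assert (exists h, 0 < h <= s2 - m /\ 0 <= phi (m + h)) as [h [Hh Hph]].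
    { destruct (Rlt_or_le 0 (phi m)) as [Hpos|Hz0].
      - destruct (cont_eps _ _ Hc (phi m)) as [del [Hdel Hcd]]; [lra|].
        exists (Rmin (del/2) (s2 - m)). split.
        + split; [apply Rmin_pos; lra| apply Rmin_r].
        + assert (0 < Rmin (del/2) (s2-m)) by (apply Rmin_pos; lra).
          assert (Rmin (del/2) (s2-m) <= del/2) by apply Rmin_l.
          assert (Rabs (m + Rmin (del / 2) (s2 - m) - m) < del) by (rewrite Rabs_pos_eq; lra).
          specialize (Hcd _ H3). apply Rabs_def2 in Hcd. lra.
      - assert (Hz1 : phi m = 0) by lra.
        assert (Hdp := Hz m ltac:(lra) Hz1).
        destruct (der_eps _ _ _ (Hd m ltac:(lra)) (dphi m) Hdp) as [del [Hdel Hdd]].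
        set (h := Rmin (del/2) (s2 - m)).
        assert (0 < h) by (apply Rmin_pos; lra).
        assert (h <= del/2) by apply Rmin_l.
        assert (h <= s2 - m) by apply Rmin_r.
        exists h. split; [lra|].
        specialize (Hdd h ltac:(lra) ltac:(rewrite Rabs_pos_eq; lra)).
        rewrite Hz1 in Hdd. apply Rabs_def2 in Hdd.
        assert (0 < (phi (m + h) - 0) / h) by lra.
        assert (phi (m + h) = (phi (m + h) - 0) / h * h) by (field; lra).
        nra. }
    assert (m + h <= m) by (apply Hub; split; [lra|auto]). lra.
Qed.

Lemma is_derive_sub_c (f : R -> R) (x l c : R) : is_derive f x l -> is_derive (fun y => f y - c) x l.
Proof. intros H. apply is_derive_Reals in H. apply is_derive_Reals. replace l with (l - 0) by ring.
  apply (derivable_pt_lim_minus f (fct_cte c)); [exact H| apply derivable_pt_lim_const]. Qed.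
Lemma is_derive_c_sub (f : R -> R) (x l c : R) : is_derive f x l -> is_derive (fun y => c - f y) x (- l).
Proof. intros H. apply is_derive_Reals in H. apply is_derive_Reals. replace (-l) with (0 - l) by ring.
  apply (derivable_pt_lim_minus (fct_cte c) f); [apply derivable_pt_lim_const|exact H]. Qed.

Lemma dichot (u G : R->R) S0 L :
 (forall s, S0 < s -> is_derive u s (u s^2 - u s - G s)) ->
 (forall eps, 0<eps -> exists T, forall s, T < s -> Rabs (G s - L) < eps) ->
 forall v, v^2 - v - L <> 0 ->
 exists T, (forall s, T < s -> v <= u s) \/ (forall s, T < s -> u s <= v).
Proof.
  intros Hd HG v Hv.
  destruct (HG (Rabs (v^2 - v - L))) as [T1 HT1]. { apply Rabs_pos_lt; auto. }
  set (S := Rmax S0 T1).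
  assert (HS0 : S0 <= S) by apply Rmax_l. assert (HS1 : T1 <= S) by apply Rmax_r.
  destruct (Rlt_or_le 0 (v^2 - v - L)) as [Ha|Ha].
  - rewrite Rabs_pos_eq in HT1; [|lra].
    destruct (classic (exists s1, S < s1 /\ v <= u s1)) as [[s1 [Hs1 Hvs]]|Hn].
    + exists s1. left. intros s Hs.
      assert (0 <= u s - v); [|lra].
      apply (no_cross (fun s => u s - v) (fun s => u s^2 - u s - G s) S) with (s1 := s1); try lra.
      * intros t Ht. apply is_derive_sub_c. apply Hd. lra.
      * intros t Ht Hz. assert (u t = v) by lra. rewrite H.
        specialize (HT1 t ltac:(lra)). apply Rabs_def2 in HT1. lra.
    + exists S. right. intros s Hs. destruct (Rle_or_lt (u s) v); auto.
      exfalso. apply Hn. exists s. split; lra.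
  - assert (Ha' : v^2 - v - L < 0) by (destruct Ha; auto; contradiction).
    rewrite Rabs_left in HT1; [|lra].
    destruct (classic (exists s1, S < s1 /\ u s1 <= v)) as [[s1 [Hs1 Hvs]]|Hn].
    + exists s1. right. intros s Hs.
      assert (0 <= v - u s); [|lra].
      apply (no_cross (fun s => v - u s) (fun s => - (u s^2 - u s - G s)) S) with (s1 := s1); try lra.
      * intros t Ht. apply is_derive_c_sub. apply Hd. lra.
      * intros t Ht Hz. assert (u t = v) by lra. rewrite H.
        specialize (HT1 t ltac:(lra)). apply Rabs_def2 in HT1. lra.
    + exists S. left. intros s Hs. destruct (Rle_or_lt v (u s)); auto.
      exfalso. apply Hn. exists s. split; lra.
Qed.

Lemma der_cont (f : R -> R) x l : is_derive f x l -> continuity_pt f x.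
Proof. intros H. apply is_derive_Reals in H. apply derivable_continuous_pt. exists l. exact H. Qed.

Lemma is_derive_neg_inv (f : R -> R) x l : is_derive f x l -> f x <> 0 ->
  is_derive (fun y => - / f y) x (l / f x ^ 2).
Proof.
  intros H Hn. apply is_derive_Reals in H. apply is_derive_Reals.
  replace (l / f x ^ 2) with (- (- l / f x ^2)) by (field; auto).
  apply (derivable_pt_lim_opp (fun y => / f y)).
  apply is_derive_Reals. apply is_derive_inv; auto. apply is_derive_Reals. exact H.
Qed.

Lemma mvt_ab (f df : R -> R) a b : a < b ->
  (forall x, a <= x <= b -> is_derive f x (df x)) ->
  exists c, a <= c <= b /\ f b - f a = df c * (b - a).
Proof.
  intros Hab Hd. destruct (MVT_gen f a b df) as [c [Hc Heq]].
  - intros x Hx. rewrite Rmin_left in Hx by lra. rewrite Rmax_right in Hx by lra. apply Hd; lra.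
  - intros x Hx. rewrite Rmin_left in Hx by lra. rewrite Rmax_right in Hx by lra.
    apply (der_cont f x (df x)). apply Hd; lra.
  - exists c. rewrite Rmin_left in Hc by lra. rewrite Rmax_right in Hc by lra. auto.
Qed.

Section Ric.
Variables (u G : R -> R) (S0 L B T0 : R).
Hypothesis Hd : forall s, S0 < s -> is_derive u s (u s^2 - u s - G s).
Hypothesis HB : forall s, T0 < s -> G s <= B.
Hypothesis HB1 : 1 <= B.

Lemma no_up : ~ exists T, forall s, T < s -> 2*B+2 <= u s.
Proof.
  intros [T HT].
  set (T1 := Rmax T (Rmax S0 T0) + 1).
  assert (T <= Rmax T (Rmax S0 T0)) by apply Rmax_l.
  assert (S0 <= Rmax T (Rmax S0 T0)) by (eapply Rle_trans; [apply Rmax_l|apply Rmax_r]).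
  assert (T0 <= Rmax T (Rmax S0 T0)) by (eapply Rle_trans; [apply Rmax_r|apply Rmax_r]).
  destruct (mvt_ab (fun y => - / u y) (fun y => (u y^2 - u y - G y) / u y ^2) T1 (T1 + 4))
    as [c [Hc Heq]]; [lra| |].
  - intros x Hx. apply is_derive_neg_inv. apply Hd. unfold T1 in *; lra.
    specialize (HT x ltac:(unfold T1 in *; lra)). lra.
  - assert (Huc := HT c ltac:(unfold T1 in *; lra)).
    assert (HGc := HB c ltac:(unfold T1 in *; lra)).
    assert (Hu1 := HT T1 ltac:(unfold T1 in *; lra)).
    assert (Hu2 := HT (T1+4) ltac:(unfold T1 in *; lra)).
    assert (Hx : u c ^2 - u c - G c >= u c ^2 / 2) by nra.
    assert (Hq : (u c ^2 - u c - G c) / u c ^2 >= 1/2).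
    { apply Rle_ge. apply Rle_trans with ((u c^2/2) / u c ^2).
      right. field. lra. unfold Rdiv. apply Rmult_le_compat_r.
      left. apply Rinv_0_lt_compat. nra. lra. }
    assert (- / u (T1 + 4) < 0).
    { assert (0 < / u (T1 + 4)) by (apply Rinv_0_lt_compat; lra). lra. }
    assert (- / u T1 >= -1).
    { assert (/ u T1 <= 1). { rewrite <- Rinv_1. apply Rinv_le_contravar; lra. } lra. }
    nra.
Qed.

Lemma no_down : ~ exists T, forall s, T < s -> u s <= -(2*B+2).
Proof.
  intros [T HT].
  set (T1 := Rmax T (Rmax S0 T0) + 1).
  assert (T <= Rmax T (Rmax S0 T0)) by apply Rmax_l.
  assert (S0 <= Rmax T (Rmax S0 T0)) by (eapply Rle_trans; [apply Rmax_l|apply Rmax_r]).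
  assert (T0 <= Rmax T (Rmax S0 T0)) by (eapply Rle_trans; [apply Rmax_r|apply Rmax_r]).
  assert (Hu1 := HT T1 ltac:(unfold T1 in *; lra)).
  set (b := T1 + (- u T1) + 1).
  destruct (mvt_ab u (fun y => (u y^2 - u y - G y)) T1 b)
    as [c [Hc Heq]]; [unfold b; lra| |].
  - intros x Hx. apply Hd. unfold T1 in *; lra.
  - assert (Huc := HT c ltac:(unfold T1 in *; lra)).
    assert (HGc := HB c ltac:(unfold T1 in *; lra)).
    assert (Hu2 := HT b ltac:(unfold b, T1 in *; lra)).
    assert (Hx : u c ^2 - u c - G c >= 1) by nra.
    assert (u b - u T1 >= b - T1) by (rewrite Heq; assert (b - T1 > 0) by (unfold b; lra); nra).
    unfold b in *. lra.
Qed.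
End Ric.

Lemma exists_nonroot L a b : a < b -> exists v, a < v < b /\ v^2 - v - L <> 0.
Proof.
  intros Hab.
  set (x1 := a + (b-a)/4). set (x2 := (a+b)/2). set (x3 := a + 3*(b-a)/4).
  destruct (classic (x1^2 - x1 - L = 0)) as [H1|H1];
  [|exists x1; split; [unfold x1; lra|auto]].
  destruct (classic (x2^2 - x2 - L = 0)) as [H2|H2];
  [|exists x2; split; [unfold x2; lra|auto]].
  destruct (classic (x3^2 - x3 - L = 0)) as [H3|H3];
  [|exists x3; split; [unfold x3; lra|auto]].
  exfalso.
  assert ((x1 - x2) * (x1 + x2 - 1) = 0) by nra.
  assert ((x1 - x3) * (x1 + x3 - 1) = 0) by nra.
  assert (x1 - x2 <> 0) by (unfold x1, x2; lra).
  assert (x1 - x3 <> 0) by (unfold x1, x3; lra).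
  apply Rmult_integral in H. apply Rmult_integral in H0.
  destruct H, H0; try contradiction.
  unfold x1,x2,x3 in *; lra.
Qed.

Lemma lim_quad (u G : R -> R) r L :
  (forall eps, 0 < eps -> exists T, forall s, T < s -> Rabs (u s - r) < eps) ->
  (forall eps, 0 < eps -> exists T, forall s, T < s -> Rabs (G s - L) < eps) ->
  (forall eps, 0 < eps -> exists T, forall s, T < s ->
     Rabs ((u s^2 - u s - G s) - (r^2 - r - L)) < eps).
Proof.
  intros Hu HG eps He.
  set (del := Rmin 1 (eps / 2 / (2 * Rabs r + 2))).
  assert (Hr : 0 < 2 * Rabs r + 2) by (pose proof (Rabs_pos r); lra).
  assert (Hdel : 0 < del) by (apply Rmin_pos; [lra| apply Rdiv_lt_0_compat; lra]).
  assert (Hd1 : del <= 1) by apply Rmin_l.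
  assert (Hd2 : del * (2 * Rabs r + 2) <= eps/2).
  { assert (del <= eps / 2 / (2 * Rabs r + 2)) by apply Rmin_r.
    apply Rmult_le_compat_r with (r := 2 * Rabs r + 2) in H; [|lra].
    replace (eps / 2 / (2 * Rabs r + 2) * (2 * Rabs r + 2)) with (eps/2) in H by (field; lra). exact H. }
  destruct (Hu del Hdel) as [T1 H1]. destruct (HG (eps/2) ltac:(lra)) as [T2 H2].
  exists (Rmax T1 T2). intros s Hs.
  assert (T1 <= Rmax T1 T2) by apply Rmax_l. assert (T2 <= Rmax T1 T2) by apply Rmax_r.
  specialize (H1 s ltac:(lra)). specialize (H2 s ltac:(lra)).
  replace ((u s^2 - u s - G s) - (r^2 - r - L)) with ((u s - r) * (u s + r - 1) - (G s - L)) by ring.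
  eapply Rle_lt_trans. apply Rabs_triang. rewrite Rabs_Ropp, Rabs_mult.
  assert (Rabs (u s + r - 1) <= 2 * Rabs r + 2).
  { apply Rabs_def2 in H1. pose proof (Rle_abs r). pose proof (Rle_abs (-r)). rewrite Rabs_Ropp in H4.
    apply Rabs_le. lra. }
  assert (Rabs (u s - r) * Rabs (u s + r - 1) <= del * (2 * Rabs r + 2)).
  { apply Rmult_le_compat; try apply Rabs_pos; lra. }
  lra.
Qed.

Lemma riccati (u G : R -> R) S0 L :
 (forall s, S0 < s -> is_derive u s (u s^2 - u s - G s)) ->
 (forall eps, 0<eps -> exists T, forall s, T < s -> Rabs (G s - L) < eps) ->
 exists r, (forall eps, 0 < eps -> exists T, forall s, T < s -> Rabs (u s - r) < eps)
   /\ r^2 - r - L = 0.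
Proof.
  intros Hd HG.
  set (B := Rabs L + 1).
  destruct (HG 1 ltac:(lra)) as [T0 HT0].
  assert (HB : forall s, T0 < s -> G s <= B).
  { intros s Hs. specialize (HT0 s Hs). apply Rabs_def2 in HT0.
    pose proof (Rle_abs L). unfold B. lra. }
  assert (HB1 : 1 <= B) by (pose proof (Rabs_pos L); unfold B; lra).
  set (K := 2*B+2).
  set (A := fun v => exists T, forall s, T < s -> v <= u s).
  destruct (completeness A) as [r [Hub Hlub]].
  { exists K. intros v [T HT]. destruct (Rle_or_lt v K) as [?|Hv]; auto. exfalso.
    apply (no_up u G S0 B T0 Hd HB HB1). exists T. intros s Hs. specialize (HT s Hs). unfold K in Hv. lra. }
  { destruct (dichot u G S0 L Hd HG (-K)) as [T [HT|HT]].
    - pose proof (Rle_abs L). pose proof (Rle_abs (-L)). rewrite Rabs_Ropp in H0.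
      unfold K, B in *. nra.
    - exists (-K), T. exact HT.
    - exfalso. apply (no_down u G S0 B T0 Hd HB HB1). exists T. exact HT. }
  assert (Hconv : forall eps, 0 < eps -> exists T, forall s, T < s -> Rabs (u s - r) < eps).
  { intros eps He.
    assert (exists v', A v' /\ r - eps/2 < v') as [v' [[Ta HTa] Hv']].
    { apply NNPP. intros Hn.
      assert (r <= r - eps/2); [|lra].
      apply Hlub. intros v Hv. destruct (Rle_or_lt v (r - eps/2)); auto.
      exfalso. apply Hn. exists v. split; auto. }
    destruct (exists_nonroot L r (r + eps/2)) as [v2 [Hv2 Hnr]]; [lra|].
    destruct (dichot u G S0 L Hd HG v2 Hnr) as [Tb [HTb|HTb]].
    - exfalso. assert (v2 <= r) by (apply Hub; exists Tb; exact HTb). lra.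
    - exists (Rmax Ta Tb). intros s Hs.
      assert (Ta <= Rmax Ta Tb) by apply Rmax_l. assert (Tb <= Rmax Ta Tb) by apply Rmax_r.
      specialize (HTa s ltac:(lra)). specialize (HTb s ltac:(lra)).
      apply Rabs_def1; lra. }
  exists r. split; auto.
  pose proof (lim_quad u G r L Hconv HG) as HE.
  set (a := r^2 - r - L) in *.
  destruct (Rtotal_order a 0) as [Hn|[Hz|Hp]]; auto; exfalso.
  - destruct (HE (-a/2) ltac:(lra)) as [T1 HT1].
    destruct (Hconv 1 ltac:(lra)) as [T2 HT2].
    set (T := Rmax (Rmax T1 T2) S0 + 1).
    assert (Rmax T1 T2 <= Rmax (Rmax T1 T2) S0) by apply Rmax_l.
    assert (S0 <= Rmax (Rmax T1 T2) S0) by apply Rmax_r.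
    assert (T1 <= Rmax T1 T2) by apply Rmax_l. assert (T2 <= Rmax T1 T2) by apply Rmax_r.
    destruct (mvt_ab u (fun y => u y^2 - u y - G y) T (T + 4 / (-a))) as [c [Hc Heq]].
    + assert (0 < 4 / (-a)) by (apply Rdiv_lt_0_compat; lra). lra.
    + intros x Hx. apply Hd. unfold T in *; lra.
    + assert (0 < 4 / (-a)) by (apply Rdiv_lt_0_compat; lra).
      specialize (HT1 c ltac:(unfold T in *; lra)). apply Rabs_def2 in HT1.
      assert (Hq1 := HT2 T ltac:(unfold T in *; lra)). assert (Hq2 := HT2 (T + 4 / (-a)) ltac:(unfold T in *; lra)).
      apply Rabs_def2 in Hq1. apply Rabs_def2 in Hq2.
      assert (Hm : (u c ^ 2 - u c - G c) * (T + 4 / - a - T) <= (a/2) * (4 / (-a))).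
      { replace (T + 4 / - a - T) with (4 / (-a)) by ring. apply Rmult_le_compat_r; lra. }
      replace (a / 2 * (4 / - a)) with (-2) in Hm by (field; lra). lra.
  - destruct (HE (a/2) ltac:(lra)) as [T1 HT1].
    destruct (Hconv 1 ltac:(lra)) as [T2 HT2].
    set (T := Rmax (Rmax T1 T2) S0 + 1).
    assert (Rmax T1 T2 <= Rmax (Rmax T1 T2) S0) by apply Rmax_l.
    assert (S0 <= Rmax (Rmax T1 T2) S0) by apply Rmax_r.
    assert (T1 <= Rmax T1 T2) by apply Rmax_l. assert (T2 <= Rmax T1 T2) by apply Rmax_r.
    destruct (mvt_ab u (fun y => u y^2 - u y - G y) T (T + 4 / a)) as [c [Hc Heq]].
    + assert (0 < 4 / a) by (apply Rdiv_lt_0_compat; lra). lra.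
    + intros x Hx. apply Hd. unfold T in *; lra.
    + assert (0 < 4 / a) by (apply Rdiv_lt_0_compat; lra).
      specialize (HT1 c ltac:(unfold T in *; lra)). apply Rabs_def2 in HT1.
      assert (Hq1 := HT2 T ltac:(unfold T in *; lra)). assert (Hq2 := HT2 (T + 4 / a) ltac:(unfold T in *; lra)).
      apply Rabs_def2 in Hq1. apply Rabs_def2 in Hq2.
      assert (Hm : (a/2) * (4 / a) <= (u c ^ 2 - u c - G c) * (T + 4 / a - T)).
      { replace (T + 4 / a - T) with (4 / a) by ring. apply Rmult_le_compat_r; lra. }
      replace (a / 2 * (4 / a)) with 2 in Hm by (field; lra). lra.
Qed.

Lemma der_H (P DP : R -> R) k y : 0 < y -> P y <> 0 -> is_derive P y (DP y) ->
  is_derive (fun z => ln (P z ^2) - k * ln z) y (2 * DP y / P y - k / y).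
Proof.
  intros Hy HP HD.
  auto_derive.
  - split; [exists (DP y); exact HD|]. split; [|split; auto].
    rewrite Rmult_1_r. apply Rsqr_pos_lt; auto.
  - replace (Derive (fun x => P x) y) with (DP y) by (symmetry; apply is_derive_unique; exact HD).
    field. split; lra || auto.
Qed.

Lemma ln_small (A : R) (x1 : R) : 0 < x1 -> exists x, 0 < x <= x1 /\ ln x < A.
Proof.
  intros Hx1. set (N := Rabs A + Rabs (ln x1) + 1).
  exists (exp (- N)). split; [split; [apply exp_pos|]|].
  - rewrite <- (exp_ln x1) by auto. apply Rlt_le, exp_increasing.
    pose proof (Rle_abs (-ln x1)). rewrite Rabs_Ropp in H. pose proof (Rabs_pos A). unfold N; lra.
  - rewrite ln_exp. pose proof (Rle_abs (-A)). rewrite Rabs_Ropp in H. pose proof (Rabs_pos (ln x1)). unfold N; lra.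
Qed.

Lemma ln_le' a b : 0 < a -> a <= b -> ln a <= ln b.
Proof. intros Ha [Hl|He]. left. apply ln_increasing; auto. right. subst. reflexivity. Qed.

Lemma ln_sq_mul a b : 0 < a -> 0 < b -> ln (a^2 * b^4) = 2 * ln a + 4 * ln b.
Proof. intros Ha Hb. rewrite ln_mult, !ln_pow by (try apply pow_lt; auto). simpl INR. ring. Qed.

Lemma ell2 (P DP : R -> R) x0 M C ell :
 0 < x0 ->
 (forall x, 0 < x <= x0 -> P x <> 0 /\ is_derive P x (DP x)) ->
 (forall x, 0 < x <= x0 -> x^2 <= M * Rabs (P x)) ->
 (forall x, 0 < x <= x0 -> Rabs (P x) <= C * x^2) ->
 (forall eps, 0 < eps -> exists del, 0 < del /\ forall x, 0 < x < del ->
     Rabs (x * DP x / P x - ell) < eps) ->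
 ell = 2.
Proof.
  intros Hx0 HP HM HC Hl.
  assert (HPsq : forall x, P x ^ 2 = Rabs (P x) ^ 2).
  { intros x. rewrite pow2_abs. reflexivity. }
  assert (HPpos : forall x, 0 < x <= x0 -> 0 < Rabs (P x)).
  { intros x Hx. apply Rabs_pos_lt. apply HP; auto. }
  destruct (Rtotal_order ell 2) as [Hlt|[Heq|Hgt]]; auto; exfalso.
  - set (eps := (2 - ell)/2).
    destruct (Hl eps ltac:(unfold eps; lra)) as [del [Hdel Hd]].
    set (x1 := Rmin (del/2) x0).
    assert (0 < x1) by (apply Rmin_pos; lra).
    assert (x1 <= del/2) by apply Rmin_l. assert (x1 <= x0) by apply Rmin_r.
    set (Hf := fun z => ln (P z ^2) - (4 - 2*eps) * ln z).
    assert (HH : forall x, 0 < x <= x1 -> Hf x1 <= Hf x).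
    { intros x Hx. destruct (Req_dec x x1) as [->|Hne]; [lra|].
      destruct (mvt_ab Hf (fun z => 2 * DP z / P z - (4 - 2*eps) / z) x x1) as [c [Hc Heqc]]; [lra| |].
      - intros z Hz. apply der_H; try lra; apply HP; lra.
      - assert (Hq := Hd c ltac:(lra)). apply Rabs_def2 in Hq.
        assert (Hpc : P c <> 0) by (apply HP; lra).
        assert (E1 : 2 * DP c / P c - (4 - 2 * eps) / c = (2/c) * (c * DP c / P c - (2 - eps))) by (field; lra).
        assert (2 / c > 0) by (apply Rdiv_lt_0_compat; lra).
        assert ((2/c) * (c * DP c / P c - (2 - eps)) <= 0).
        { unfold eps in *. nra. }
        rewrite E1 in Heqc. nra. }
    assert (HC0 : 0 < C).
    { assert (Hc1 := HC x1 ltac:(lra)). assert (Hp1 := HPpos x1 ltac:(lra)).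
      assert (0 < x1^2) by (apply pow_lt; lra). nra. }
    destruct (ln_small ((Hf x1 - 2 * ln C) / (2*eps)) x1) as [x [Hx Hlnx]]; auto.
    assert (Hxx := HH x Hx). unfold Hf in Hxx.
    assert (ln (P x ^ 2) <= 2 * ln C + 4 * ln x).
    { rewrite <- ln_sq_mul by lra. apply ln_le'.
      - rewrite HPsq. apply pow_lt. apply HPpos; lra.
      - rewrite HPsq. replace (C^2 * x^4) with ((C * x^2)^2) by ring.
        apply pow_incr. split; [apply Rabs_pos|]. apply HC; lra. }
    assert (Heps : 0 < 2 * eps) by (unfold eps; lra).
    assert (2*eps * ln x < Hf x1 - 2 * ln C).
    { apply Rmult_lt_compat_l with (r := 2*eps) in Hlnx; auto.
      replace (2 * eps * ((Hf x1 - 2 * ln C) / (2 * eps))) with (Hf x1 - 2 * ln C) in Hlnx by (field; lra).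
      exact Hlnx. }
    unfold Hf in *. lra.
  - set (eps := (ell - 2)/2).
    destruct (Hl eps ltac:(unfold eps; lra)) as [del [Hdel Hd]].
    set (x1 := Rmin (del/2) x0).
    assert (0 < x1) by (apply Rmin_pos; lra).
    assert (x1 <= del/2) by apply Rmin_l. assert (x1 <= x0) by apply Rmin_r.
    set (Hf := fun z => ln (P z ^2) - (4 + 2*eps) * ln z).
    assert (HH : forall x, 0 < x <= x1 -> Hf x <= Hf x1).
    { intros x Hx. destruct (Req_dec x x1) as [->|Hne]; [lra|].
      destruct (mvt_ab Hf (fun z => 2 * DP z / P z - (4 + 2*eps) / z) x x1) as [c [Hc Heqc]]; [lra| |].
      - intros z Hz. apply der_H; try lra; apply HP; lra.
      - assert (Hq := Hd c ltac:(lra)). apply Rabs_def2 in Hq.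
        assert (Hpc : P c <> 0) by (apply HP; lra).
        assert (E1 : 2 * DP c / P c - (4 + 2 * eps) / c = (2/c) * (c * DP c / P c - (2 + eps))) by (field; lra).
        assert (2 / c > 0) by (apply Rdiv_lt_0_compat; lra).
        assert ((2/c) * (c * DP c / P c - (2 + eps)) >= 0).
        { unfold eps in *. nra. }
        rewrite E1 in Heqc. nra. }
    assert (HM0 : 0 < M).
    { assert (Hc1 := HM x1 ltac:(lra)). assert (Hp1 := HPpos x1 ltac:(lra)).
      assert (0 < x1^2) by (apply pow_lt; lra). nra. }
    destruct (ln_small (- (Hf x1 + 2 * ln M) / (2*eps)) x1) as [x [Hx Hlnx]]; auto.
    assert (Hxx := HH x Hx). unfold Hf in Hxx.
    assert (4 * ln x <= 2 * ln M + ln (P x ^ 2)).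
    { replace (4 * ln x) with (ln (1^2 * x^4)) by (rewrite ln_sq_mul by lra; rewrite ln_1; ring).
      replace (2 * ln M) with (ln (M^2)) by (rewrite ln_pow by lra; simpl INR; ring). rewrite <- ln_mult.
      2: apply pow_lt; lra.
      2: rewrite HPsq; apply pow_lt; apply HPpos; lra.
      apply ln_le'.
      - apply Rmult_lt_0_compat; [lra| apply pow_lt; lra].
      - rewrite HPsq. replace (1^2 * x^4) with ((x^2)^2) by ring.
        replace (M ^ 2 * Rabs (P x) ^ 2) with ((M * Rabs (P x))^2) by ring.
        apply pow_incr. split; [apply pow2_ge_0|]. apply HM; lra. }
        assert (Heps : 0 < 2 * eps) by (unfold eps; lra).
    assert (2*eps * ln x < - (Hf x1 + 2 * ln M)).
    { apply Rmult_lt_compat_l with (r := 2*eps) in Hlnx; auto.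
      replace (2 * eps * (- (Hf x1 + 2 * ln M) / (2 * eps))) with (- (Hf x1 + 2 * ln M)) in Hlnx by (field; lra).
      exact Hlnx. }
    unfold Hf in *. lra.
Qed.

Lemma ck_d0 f k : Ck_oc (S k) f -> forall x, 0<x<1 -> ex_derive f x.
Proof. intros [H _] x Hx. exact (H 0%nat (Nat.lt_0_succ k) x Hx). Qed.
Lemma ck_d1 f : Ck_oc 2 f -> forall x, 0<x<1 -> ex_derive (Derive f) x.
Proof. intros [H _] x Hx. exact (H 1%nat ltac:(lia) x Hx). Qed.

Section WW.
Variables w1 w2 : R -> R.
Hypothesis Hw1 : Ck_oc 2 w1.
Hypothesis Hw2 : Ck_oc 2 w2.

Lemma wt_D1 x : 0 < x < 1 -> Derive (wt w1 w2) x = Derive w1 x * w2 x + w1 x * Derive w2 x.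
Proof.
  intros Hx. unfold wt. apply Derive_mult; eapply ck_d0; eauto.
Qed.

Lemma wt_ex1 x : 0 < x < 1 -> ex_derive (wt w1 w2) x.
Proof.
  intros Hx. unfold wt. apply ex_derive_mult; eapply ck_d0; eauto.
Qed.

Lemma wt_ex2 x : 0 < x < 1 -> ex_derive (Derive (wt w1 w2)) x.
Proof.
  intros Hx.
  apply ex_derive_ext_loc with (f := fun y => Derive w1 y * w2 y + w1 y * Derive w2 y).
  - apply locally_interval with (a := Finite 0) (b := Finite 1); simpl; try lra.
    intros y Hy1 Hy2. symmetry. apply wt_D1. lra.
  - auto_derive. repeat split; first [apply (ck_d1 _ Hw1 x Hx) | apply (ck_d1 _ Hw2 x Hx) | apply (ck_d0 _ 1 Hw1 x Hx) | apply (ck_d0 _ 1 Hw2 x Hx)].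
Qed.

Definition GW (s : R) := exp (-s) ^ 2 * Derive_n (wt w1 w2) 2 (exp (-s)) / wt w1 w2 (exp (-s)).
Definition uW (s : R) := Wfun w1 w2 s - 1.

Lemma exp_m_01 s : 0 < s -> 0 < exp (-s) < 1.
Proof. intros Hs. split. apply exp_pos. rewrite <- exp_0. apply exp_increasing. lra. Qed.

Hypothesis Hwpos : forall x, 0 < x < 1 -> 0 < wt w1 w2 x.

Lemma uW_der s : 0 < s -> is_derive uW s (uW s ^2 - uW s - GW s).
Proof.
  intros Hs. pose proof (exp_m_01 s Hs) as He.
  pose proof (Hwpos _ He).
  unfold uW, Wfun, GW.
  auto_derive.
  - repeat split; try apply wt_ex2; try apply wt_ex1; auto; lra.
  - change (Derive (fun x => Derive (wt w1 w2) x) (exp (-s))) with (Derive_n (wt w1 w2) 2 (exp (-s))).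
    change (Derive (fun x => wt w1 w2 x)) with (Derive (wt w1 w2)).
    set (X := exp (-s)) in *. set (D1 := Derive (wt w1 w2) X). set (D2 := Derive_n (wt w1 w2) 2 X).
    set (W := wt w1 w2 X) in *. field. lra.
Qed.
End WW.

Lemma ev_r0 (Q : R -> Prop) : at_right 0 Q -> exists del, 0 < del /\ forall x, 0 < x < del -> Q x.
Proof.
  intros [del H]. exists del. split. apply cond_pos. intros x [H1 H2]. apply H; auto.
  change (Rabs (x - 0) < del). rewrite Rminus_0_r, Rabs_pos_eq; lra.
Qed.

Lemma abs_facts x : (Rabs x = x /\ 0 <= x) \/ (Rabs x = -x /\ x < 0).
Proof.
  destruct (Rle_or_lt 0 x). left. split; auto. apply Rabs_pos_eq; auto.
  right. split; auto. apply Rabs_left; auto.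
Qed.

Lemma d_sep (d : R -> R) d0 lam : filterlim d (at_right 0) (Rbar_locally d0) -> Finite lam <> d0 ->
  exists del c, 0 < del /\ 0 < c /\ forall x, 0 < x < del -> Rabs (d x) + 1 <= c * Rabs (d x - lam).
Proof.
  intros Hl Hn. destruct d0 as [a| |].
  - assert (Ha : a <> lam) by (intros ->; apply Hn; reflexivity).
    set (e := Rabs (a - lam) / 2).
    assert (He : 0 < e) by (unfold e; assert (0 < Rabs (a - lam)) by (apply Rabs_pos_lt; lra); lra).
    destruct (ev_r0 _ (Hl (fun y => Rabs (y - a) < e) ltac:(exists (mkposreal e He); intros y Hy; exact Hy)))
      as [del [Hdel Hd]].
    exists del, ((Rabs a + e + 1) / e). split; auto. split.
    { apply Rdiv_lt_0_compat; auto. pose proof (Rabs_pos a). lra. }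
    intros x Hx. specialize (Hd x Hx). simpl in Hd.
    assert (H1 : e <= Rabs (d x - lam)).
    { unfold e in *. destruct (abs_facts (a - lam)) as [[E1 F1]|[E1 F1]]; rewrite E1 in *;
      destruct (abs_facts (d x - a)) as [[E2 F2]|[E2 F2]]; rewrite E2 in *;
      destruct (abs_facts (d x - lam)) as [[E3 F3]|[E3 F3]]; rewrite E3 in *; lra. }
    assert (H2 : Rabs (d x) <= Rabs a + e).
    { destruct (abs_facts a) as [[E1 F1]|[E1 F1]]; rewrite E1 in *;
      destruct (abs_facts (d x - a)) as [[E2 F2]|[E2 F2]]; rewrite E2 in *;
      destruct (abs_facts (d x)) as [[E3 F3]|[E3 F3]]; rewrite E3 in *; lra. }
    apply Rle_trans with ((Rabs a + e + 1) / e * e).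
    + replace ((Rabs a + e + 1) / e * e) with (Rabs a + e + 1) by (field; lra). lra.
    + apply Rmult_le_compat_l; auto. left. apply Rdiv_lt_0_compat; auto. pose proof (Rabs_pos a). lra.
  - set (N := 2 * Rabs lam + 1).
    destruct (ev_r0 _ (Hl (fun y => N < y) ltac:(exists N; intros y Hy; exact Hy))) as [del [Hdel Hd]].
    exists del, 2. split; auto. split; [lra|]. intros x Hx. specialize (Hd x Hx).
    pose proof (Rle_abs lam). pose proof (Rle_abs (-lam)). rewrite Rabs_Ropp in *. unfold N in *.
    rewrite (Rabs_pos_eq (d x)) by lra. rewrite (Rabs_pos_eq (d x - lam)) by lra. lra.
  - set (N := - (2 * Rabs lam + 1)).
    destruct (ev_r0 _ (Hl (fun y => y < N) ltac:(exists N; intros y Hy; exact Hy))) as [del [Hdel Hd]].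
    exists del, 2. split; auto. split; [lra|]. intros x Hx. specialize (Hd x Hx).
    pose proof (Rle_abs lam). pose proof (Rle_abs (-lam)). rewrite Rabs_Ropp in *. unfold N in *.
    rewrite (Rabs_left (d x)) by lra. rewrite (Rabs_left (d x - lam)) by lra. lra.
Qed.

Lemma pit_upper (p d w1 w2 : R -> R) (b : R -> C) d0 lam xl :
 filterlim d (at_right 0) (Rbar_locally d0) ->
 (exists beta, 0 < beta /\ forall x, 0 < x <= 1 -> Cmod (b x) / x <= beta * (Rabs (d x) + 1)) ->
 (exists lam0 : R, Finite lam0 <> d0 /\ exists xl0, 0 < xl0 < 1 /\ exists M : R, forall x, 0 < x <= xl0 ->
       d x <> lam0 /\ Rabs (pit p d w1 w2 b x lam0 / x ^ 2) <= M) ->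
 Finite lam <> d0 -> 0 < xl -> xl < 1 -> (forall x, 0 < x <= xl -> d x <> lam) ->
 exists x2 C, 0 < x2 /\ forall x, 0 < x <= x2 -> Rabs (pit p d w1 w2 b x lam) <= C * x^2.
Proof.
  intros HB1 [beta [Hbeta HB2]] [lam0 [Hl0 [xl0 [Hxl0 [M0 HM0]]]]] Hnd Hxl Hxl1 Hdl.
  destruct (d_sep d d0 lam HB1 Hnd) as [del1 [c1 [Hd1 [Hc1 Hs1]]]].
  destruct (d_sep d d0 lam0 HB1 Hl0) as [del2 [c2 [Hd2 [Hc2 Hs2]]]].
  set (x2 := Rmin (Rmin xl xl0) (Rmin (del1/2) (del2/2))).
  assert (Hx2 : 0 < x2) by (repeat apply Rmin_pos; lra).
  assert (x2 <= Rmin xl xl0) by apply Rmin_l. assert (x2 <= Rmin (del1/2) (del2/2)) by apply Rmin_r.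
  assert (Rmin xl xl0 <= xl) by apply Rmin_l. assert (Rmin xl xl0 <= xl0) by apply Rmin_r.
  assert (Rmin (del1/2) (del2/2) <= del1/2) by apply Rmin_l. assert (Rmin (del1/2) (del2/2) <= del2/2) by apply Rmin_r.
  exists x2, (M0 + beta^2 * c1 * c2 * Rabs (lam0 - lam)). split; auto.
  intros x Hx.
  destruct (HM0 x ltac:(lra)) as [Hdl0 Hm0].
  assert (Hdl1 := Hdl x ltac:(lra)).
  set (D := d x) in *. set (B := Cmod (b x)).
  assert (HBpos : 0 <= B) by apply Cmod_ge_0.
  assert (Hx0 : 0 < x) by lra.
  assert (Hxsq : 0 < x^2) by (apply pow_lt; lra).
  assert (Heq : pit p d w1 w2 b x lam = pit p d w1 w2 b x lam0 + B^2 * (lam0 - lam) / ((D - lam0) * (D - lam))).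
  { unfold pit. fold D. fold B. set (A0 := w2 x / w1 x * p x).
    assert (D - lam0 <> 0) by (intro; apply Hdl0; lra). assert (D - lam <> 0) by (intro; apply Hdl1; lra).
    field. auto. }
  assert (Hp0 : Rabs (pit p d w1 w2 b x lam0) <= M0 * x^2).
  { replace (pit p d w1 w2 b x lam0) with (pit p d w1 w2 b x lam0 / x^2 * x^2) by (field; lra).
    rewrite Rabs_mult, (Rabs_pos_eq (x^2)) by lra. apply Rmult_le_compat_r; lra. }
  assert (HBb : B <= beta * x * (Rabs D + 1)).
  { assert (Hq := HB2 x ltac:(lra)). fold D B in Hq.
    replace B with (B / x * x) by (field; lra).
    replace (beta * x * (Rabs D + 1)) with (beta * (Rabs D + 1) * x) by ring.
    apply Rmult_le_compat_r; lra. }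
  assert (HB2' : B^2 <= beta^2 * x^2 * (Rabs D + 1)^2).
  { replace (beta^2 * x^2 * (Rabs D + 1)^2) with ((beta * x * (Rabs D + 1))^2) by ring.
    apply pow_incr. lra. }
  assert (HQ : (Rabs D + 1)^2 <= c1 * c2 * (Rabs (D - lam) * Rabs (D - lam0))).
  { assert (Ha := Hs1 x ltac:(lra)). assert (Hb := Hs2 x ltac:(lra)). fold D in Ha, Hb.
    replace ((Rabs D + 1)^2) with ((Rabs D + 1) * (Rabs D + 1)) by ring.
    replace (c1 * c2 * (Rabs (D - lam) * Rabs (D - lam0))) with ((c1 * Rabs (D - lam)) * (c2 * Rabs (D - lam0))) by ring.
    pose proof (Rabs_pos D). apply Rmult_le_compat; lra. }
  assert (HQpos : 0 < Rabs (D - lam) * Rabs (D - lam0)).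
  { apply Rmult_lt_0_compat; apply Rabs_pos_lt; intro; [apply Hdl1|apply Hdl0]; lra. }
  assert (Hsec : Rabs (B^2 * (lam0 - lam) / ((D - lam0) * (D - lam))) <= beta^2 * c1 * c2 * Rabs (lam0 - lam) * x^2).
  { unfold Rdiv. rewrite !Rabs_mult, Rabs_inv, Rabs_mult. rewrite (Rabs_pos_eq (B^2)) by (apply pow2_ge_0).
    assert (B^2 <= beta^2 * x^2 * c1 * c2 * (Rabs (D - lam) * Rabs (D - lam0))).
    { eapply Rle_trans. exact HB2'. replace (beta^2 * x^2 * c1 * c2 * (Rabs (D - lam) * Rabs (D - lam0)))
        with (beta^2 * x^2 * (c1 * c2 * (Rabs (D - lam) * Rabs (D - lam0)))) by ring.
      apply Rmult_le_compat_l; auto. apply Rmult_le_pos; apply pow2_ge_0. }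
    replace (Rabs (D - lam0) * Rabs (D - lam)) with (Rabs (D - lam) * Rabs (D - lam0)) by ring.
    set (Q := Rabs (D - lam) * Rabs (D - lam0)) in *.
    apply Rle_trans with (beta ^ 2 * x ^ 2 * c1 * c2 * Q * Rabs (lam0 - lam) * / Q).
    - apply Rmult_le_compat_r. left. apply Rinv_0_lt_compat; auto.
      apply Rmult_le_compat_r. apply Rabs_pos. auto.
    - right. field. lra. }
  rewrite Heq. eapply Rle_trans. apply Rabs_triang. lra.
Qed.

Lemma Cmod_sq (z : C) : Cmod z ^ 2 = Re z ^ 2 + Im z ^ 2.
Proof. unfold Cmod. rewrite pow2_sqrt. reflexivity. pose proof (pow2_ge_0 (fst z)). pose proof (pow2_ge_0 (snd z)). lra. Qed.

Lemma ex_der_gen (w2 w1 p br bi d : R -> R) lam x :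
  ex_derive w2 x -> ex_derive w1 x -> ex_derive p x -> ex_derive br x -> ex_derive bi x -> ex_derive d x ->
  w1 x <> 0 -> d x <> lam ->
  ex_derive (fun y => w2 y / w1 y * p y - (br y ^ 2 + bi y ^ 2) / (d y - lam)) x.
Proof.
  intros H1 H2 H3 H4 H5 H6 H7 H8. auto_derive. repeat split; auto. intro; apply H8; lra.
Qed.

Lemma pit_ex (p d w1 w2 : R -> R) (b : R -> C) lam x :
  Ck_oc 2 p -> Ck_oc 2 d -> Ck_oc_C 2 b -> Ck_oc 2 w1 -> Ck_oc 2 w2 ->
  0 < x < 1 -> w1 x <> 0 -> d x <> lam -> ex_derive (fun y => pit p d w1 w2 b y lam) x.
Proof.
  intros Hp Hd [Hb1 Hb2] Hw1 Hw2 Hx Hw Hdl.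
  apply ex_derive_ext with (f := fun y => w2 y / w1 y * p y - ((fun t => Re (b t)) y ^ 2 + (fun t => Im (b t)) y ^ 2) / (d y - lam)).
  { intros t. unfold pit. rewrite Cmod_sq. reflexivity. }
  apply ex_der_gen; auto.
  apply (ck_d0 _ 1 Hw2 x Hx). apply (ck_d0 _ 1 Hw1 x Hx). apply (ck_d0 _ 1 Hp x Hx).
  apply (ck_d0 _ 1 Hb1 x Hx). apply (ck_d0 _ 1 Hb2 x Hx). apply (ck_d0 _ 1 Hd x Hx).
Qed.

Lemma rho_eq (p d w1 w2 : R -> R) (b : R -> C) lam x :
  Ck_oc 2 p -> Ck_oc 2 d -> Ck_oc_C 2 b -> Ck_oc 2 w1 -> Ck_oc 2 w2 ->
  0 < x < 1 -> 0 < wt w1 w2 x -> d x <> lam ->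
  rho_im p d w1 w2 b x lam = Derive (wt w1 w2) x / wt w1 w2 x * pit p d w1 w2 b x lam
     + Derive (fun y => pit p d w1 w2 b y lam) x.
Proof.
  intros Hp Hd Hb Hw1 Hw2 Hx Hw Hdl.
  assert (Hw1x : w1 x <> 0). { intro H. unfold wt in Hw. rewrite H in Hw. lra. }
  unfold rho_im.
  rewrite (Derive_mult (fun y => wt w1 w2 y) (fun y => pit p d w1 w2 b y lam) x).
  - change (Derive (fun y => wt w1 w2 y) x) with (Derive (wt w1 w2) x). field. lra.
  - apply (wt_ex1 w1 w2 Hw1 Hw2 x Hx).
  - apply pit_ex; auto.
Qed.

Lemma Im_div (a bb : R) (z : C) : bb <> 0 -> Im (RtoC a * z / RtoC bb)%C = a * Im z / bb.
Proof.
  intros H. destruct z as [z1 z2]. unfold Cdiv, Cinv, Cmult, RtoC, Im, Re; simpl.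
  replace (bb * (bb * 1) + 0 * (0 * 1)) with (bb*bb) by ring. field. auto.
Qed.

Lemma Im_rhot p d w1 w2 b c x lam : Im (rhot p d w1 w2 b c x lam) = rho_im p d w1 w2 b x lam.
Proof. unfold rhot. unfold Cplus, Cmult, Ci, RtoC, Im, Re; simpl. ring. Qed.

Lemma is_derive_add_c (f : R -> R) (x l c : R) : is_derive f x l -> is_derive (fun y => f y + c) x l.
Proof. intros H. apply is_derive_Reals in H. apply is_derive_Reals. replace l with (l + 0) by ring.
  apply (derivable_pt_lim_plus f (fct_cte c)); [exact H| apply derivable_pt_lim_const]. Qed.

Theorem lemma6p3
  (p d q w1 w2 : R -> R) (b c : R -> C)
  (Hp : Ck_oc 2 p) (Hd : Ck_oc 2 d) (Hb : Ck_oc_C 2 b) (Hc : Ck_oc_C 1 c)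
  (Hq : Ck_oc 0 q) (Hw1 : Ck_oc 2 w1) (Hw2 : Ck_oc 2 w2)
  (Hppos : forall x, 0 < x <= 1 -> 0 < p x)
  (Hwpos : forall x, 0 < x < 1 -> 0 < wt w1 w2 x)
  (* (B1) *)
  (d0 : Rbar) (HB1 : filterlim d (at_right 0) (Rbar_locally d0))
  (* (B2) *)
  (HB2 : exists beta gamma : R, 0 < beta /\ 0 < gamma /\
     forall x, 0 < x <= 1 ->
       Cmod (b x) / x <= beta * (Rabs (d x) + 1) /\
       Cmod (c x) <= gamma * (Rabs (d x) + 1))
  (* (B3a) *)
  (HB3a : exists lam : R, Finite lam <> d0 /\
     exists xl, 0 < xl < 1 /\ exists M : R, forall x, 0 < x <= xl ->
       d x <> lam /\ Rabs (pit p d w1 w2 b x lam / x ^ 2) <= M)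
  (* (B3b) *)
  (HB3b : forall lam : R,
     ~ in_closure (Delta_img p d w1 w2 b) lam -> Finite lam <> d0 ->
     exists xl, 0 < xl < 1 /\ exists M : R, forall x, 0 < x <= xl ->
       d x <> lam /\ pit p d w1 w2 b x lam <> 0 /\
       Rabs (x ^ 2 / pit p d w1 w2 b x lam) <= M /\
       Cmod (rhot p d w1 w2 b c x lam / RtoC x)%C <= M /\
       Cmod (kappat p d q w1 w2 b c x lam) <= M)
  (* (C1) *)
  (HC1 : forall lam : R,
     ~ in_closure (Delta_img p d w1 w2 b) lam -> Finite lam <> d0 ->
     (exists rho0 : C, filterlim
        (fun x => (RtoC x * rhot p d w1 w2 b c x lam / RtoC (pit p d w1 w2 b x lam))%C)
        (at_right 0) (locally rho0)) /\
     (exists kappa0 : C, filterlim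
        (fun x => (RtoC (x ^ 2) * kappat p d q w1 w2 b c x lam
                   / RtoC (pit p d w1 w2 b x lam))%C)
        (at_right 0) (locally kappa0)))
  (* (C2) *)
  (HC2 : exists L : R, filterlim
     (fun x => x ^ 2 * Derive_n (wt w1 w2) 2 x / wt w1 w2 x) (at_right 0) (locally L)) :
  forall lam : R,
    ~ in_closure (Delta_img p d w1 w2 b) lam -> Finite lam <> d0 ->
    filterlim (fun x => x * Derive (fun y => pit p d w1 w2 b y lam) x
                        / pit p d w1 w2 b x lam)
      (at_right 0) (locally 2) /\
    exists Winf : R,
      filterlim (Wfun w1 w2) (Rbar_locally p_infty) (locally Winf) /\
      filterlim (Derive (Wfun w1 w2)) (Rbar_locally p_infty) (locally 0) /\
      forall rho0 : C,
        filterlim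
          (fun x => (RtoC x * rhot p d w1 w2 b c x lam / RtoC (pit p d w1 w2 b x lam))%C)
          (at_right 0) (locally rho0) ->
        Im rho0 = 1 + Winf.
Proof.
  intros lam Hnc Hnd.
  destruct (HB3b lam Hnc Hnd) as [xl [Hxl [M HM]]].
  destruct (HC1 lam Hnc Hnd) as [[rho0 Hrho0] _].
  destruct HC2 as [L HL]. rewrite lim_r0_eps in HL.
  assert (HG : forall eps, 0<eps -> exists T, forall s, T < s -> Rabs (GW w1 w2 s - L) < eps).
  { intros eps He. destruct (HL eps He) as [del [Hdel Hdd]].
    exists (Rmax 0 (- ln del)). intros s Hs.
    assert (0 <= Rmax 0 (-ln del)) by apply Rmax_l. assert (-ln del <= Rmax 0 (-ln del)) by apply Rmax_r.
    unfold GW. apply Hdd. split. apply exp_pos. rewrite <- (exp_ln del) by auto. apply exp_increasing. lra. }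
  destruct (riccati (uW w1 w2) (GW w1 w2) 0 L (fun s Hs => uW_der w1 w2 Hw1 Hw2 Hwpos s Hs) HG) as [r [Hur Hr]].
  assert (Hh : forall x, 0 < x -> uW w1 w2 (- ln x) = x * Derive (wt w1 w2) x / wt w1 w2 x).
  { intros x Hx. unfold uW, Wfun. rewrite Ropp_involutive, exp_ln by auto. ring. }
  assert (Hkey : forall rho, filterlim (fun x => (RtoC x * rhot p d w1 w2 b c x lam / RtoC (pit p d w1 w2 b x lam))%C)
          (at_right 0) (locally rho) ->
     forall eps, 0 < eps -> exists del, 0 < del /\ forall x, 0 < x < del ->
       Rabs (x * Derive (fun y => pit p d w1 w2 b y lam) x / pit p d w1 w2 b x lam - (Im rho - r)) < eps).
  { intros rho Hrho eps He.
    rewrite filterlim_locally in Hrho.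
    destruct (ev_r0 _ (Hrho (mkposreal (eps/2) ltac:(lra)))) as [del1 [Hdel1 Hd1]].
    destruct (Hur (eps/2) ltac:(lra)) as [T HT].
    set (del := Rmin (Rmin del1 xl) (exp (-T))).
    assert (Hdp : 0 < del) by (repeat apply Rmin_pos; try lra; apply exp_pos).
    assert (del <= Rmin del1 xl) by apply Rmin_l. assert (del <= exp (-T)) by apply Rmin_r.
    assert (Rmin del1 xl <= del1) by apply Rmin_l. assert (Rmin del1 xl <= xl) by apply Rmin_r.
    exists del. split; auto. intros x Hx.
    destruct (HM x ltac:(lra)) as [Hdx [Hpx _]].
    assert (Hx1 : 0 < x < 1) by lra.
    assert (Hwx := Hwpos x Hx1).
    specialize (Hd1 x ltac:(lra)). destruct Hd1 as [_ Hd1].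
    change (Rabs (Im (RtoC x * rhot p d w1 w2 b c x lam / RtoC (pit p d w1 w2 b x lam))%C - Im rho) < eps/2) in Hd1.
    rewrite Im_div in Hd1 by auto. rewrite Im_rhot in Hd1. rewrite rho_eq in Hd1 by auto.
    assert (HlnT : T < - ln x).
    { assert (ln x < ln (exp (-T))) by (apply ln_increasing; lra). rewrite ln_exp in H3. lra. }
    specialize (HT (- ln x) HlnT). rewrite Hh in HT by lra.
    set (Dp := Derive (fun y => pit p d w1 w2 b y lam) x) in *.
    set (Dw := Derive (wt w1 w2) x) in *. set (P := pit p d w1 w2 b x lam) in *.
    set (W := wt w1 w2 x) in *.
    replace (x * Dp / P - (Im rho - r)) with ((x * (Dw / W * P + Dp) / P - Im rho) - (x * Dw / W - r))
      by (field; split; lra || auto).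
    eapply Rle_lt_trans. apply Rabs_triang. rewrite Rabs_Ropp. lra. }
  destruct HB2 as [beta [gamma [Hbeta [Hgamma HB2']]]].
  assert (Hdl : forall x, 0 < x <= xl -> d x <> lam) by (intros x Hx; apply (HM x Hx)).
  destruct (pit_upper p d w1 w2 b d0 lam xl HB1
              (ex_intro _ beta (conj Hbeta (fun x Hx => proj1 (HB2' x Hx)))) HB3a Hnd ltac:(lra) ltac:(lra) Hdl)
    as [x2 [C [Hx2 HCb]]].
  assert (Hell : forall rho, filterlim (fun x => (RtoC x * rhot p d w1 w2 b c x lam / RtoC (pit p d w1 w2 b x lam))%C)
          (at_right 0) (locally rho) -> Im rho - r = 2).
  { intros rho Hrho.
    assert (Rmin xl x2 <= xl) by apply Rmin_l. assert (Rmin xl x2 <= x2) by apply Rmin_r.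
    apply (ell2 (fun y => pit p d w1 w2 b y lam) (Derive (fun y => pit p d w1 w2 b y lam)) (Rmin xl x2) M C).
    - apply Rmin_pos; lra.
    - intros x Hx. destruct (HM x ltac:(lra)) as [Hdx [Hpx _]]. split; auto.
      apply Derive_correct. apply pit_ex; auto; try lra.
      intro Hw10. assert (Hw := Hwpos x ltac:(lra)). unfold wt in Hw. rewrite Hw10 in Hw. lra.
    - intros x Hx. destruct (HM x ltac:(lra)) as [Hdx [Hpx [Hm _]]].
      replace (x^2) with (x^2 / pit p d w1 w2 b x lam * pit p d w1 w2 b x lam) at 1 by (field; auto).
      eapply Rle_trans. apply Rle_abs. rewrite Rabs_mult.
      apply Rmult_le_compat_r. apply Rabs_pos. auto.
    - intros x Hx. apply HCb. lra.
    - apply Hkey. exact Hrho. }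
  split.
  - rewrite lim_r0_eps. intros eps He. destruct (Hkey rho0 Hrho0 eps He) as [del [Hdel Hdd]].
    exists del. split; auto. intros x Hx. specialize (Hdd x Hx). rewrite (Hell rho0 Hrho0) in Hdd. exact Hdd.
  - exists (1 + r). split; [|split].
    + rewrite lim_p_eps. intros eps He. destruct (Hur eps He) as [T HT]. exists T. intros s Hs.
      specialize (HT s Hs). unfold uW in HT. replace (Wfun w1 w2 s - (1 + r)) with (Wfun w1 w2 s - 1 - r) by ring. exact HT.
    + rewrite lim_p_eps. intros eps He.
      destruct (lim_quad (uW w1 w2) (GW w1 w2) r L Hur HG eps He) as [T HT].
      exists (Rmax T 0). intros s Hs.
      assert (T <= Rmax T 0) by apply Rmax_l. assert (0 <= Rmax T 0) by apply Rmax_r.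
      rewrite Hr in HT.
      assert (Hder : is_derive (Wfun w1 w2) s (uW w1 w2 s ^ 2 - uW w1 w2 s - GW w1 w2 s)).
      { apply is_derive_ext with (f := fun t => uW w1 w2 t + 1).
        - intros t. unfold uW. unfold Rminus. rewrite Rplus_assoc, Rplus_opp_l, Rplus_0_r. reflexivity.
        - apply is_derive_add_c. apply uW_der; auto. lra. }
      rewrite (is_derive_unique _ _ _ Hder). apply HT. lra.
    + intros rho Hrho. assert (Hq0 := Hell rho Hrho). lra.
Qed.
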